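(* Let $\Psi$ be a performance metric whose representation $\Psi(\mathbf{s},\mathbf{y})=\Phi(\widehat{TP}(\mathbf{s},\mathbf{y}),v(\mathbf{s}),p(\mathbf{y}))$ is such that $\Phi(\cdot,v,p)$ does not depend on its first argument. Then $\Psi$ satisfies the probability ranking principle, in the sense that for any set $\mathbf{x}$ of $n$ instances and any conditional label distribution $\mathbb{P}(\mathbf{y}\mid\mathbf{x})=\prod_{i=1}^n\eta_i^{y_i}(1-\eta_i)^{1-y_i}$, there is a maximizer $\mathbf{s}^*$ of $U_\Psi(\cdot;\mathbb{P})$ over $\{0,1\}^n$ with $\min\{\eta_i:s^*_i=1\}\ge\max\{\eta_i:s^*_i=0\}$.
   Context: Labels are binary. For predictions $\mathbf{s}\in\{0,1\}^n$ and labels $\mathbf{y}\in\{0,1\}^n$, $\widehat{TP}(\mathbf{s},\mathbf{y})=\frac1n\sum_i s_iy_i$, $v(\mathbf{s})=\frac1n\sum_i s_i$, $p(\mathbf{y})=\frac1n\sum_i y_i$; a metric $\Psi$ is a function of the empirical confusion matrix (true/false positive/negative rates), equivalently a function $\Phi(\widehat{TP},v,p)$. $\eta_i=\mathbb{P}(Y=1\mid x_i)$, and $U_\Psi(\mathbf{s};\mathbb{P})=\mathbb{E}_{\mathbf{y}\sim\mathbb{P}(\cdot\mid\mathbf{x})}\Psi(\mathbf{s},\mathbf{y})$. *)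

(* Defs.v *)
From mathcomp Require Import all_boot all_order all_algebra.
Set Implicit Arguments. Unset Strict Implicit. Unset Printing Implicit Defensive.
Import Order.TTheory GRing.Theory Num.Theory.
Local Open Scope ring_scope.

Section Metric.
Variables (R : realFieldType) (n : nat).

Definition TPhat (s y : {ffun 'I_n -> bool}) : R :=
  n%:R^-1 * \sum_(i < n) ((s i && y i)%:R).
Definition vrate (s : {ffun 'I_n -> bool}) : R :=
  n%:R^-1 * \sum_(i < n) ((s i)%:R).
Definition prate (y : {ffun 'I_n -> bool}) : R :=
  n%:R^-1 * \sum_(i < n) ((y i)%:R).

Definition Psi_of (Phi : R -> R -> R -> R) (s y : {ffun 'I_n -> bool}) : R :=
  Phi (TPhat s y) (vrate s) (prate y).

Definition label_prob (eta : 'I_n -> R) (y : {ffun 'I_n -> bool}) : R :=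
  \prod_(i < n) (if y i then eta i else 1 - eta i).

Definition U_Psi (Phi : R -> R -> R -> R) (eta : 'I_n -> R)
    (s : {ffun 'I_n -> bool}) : R :=
  \sum_(y : {ffun 'I_n -> bool}) label_prob eta y * Psi_of Phi s y.
End Metric.

(* Main.v *)
Require Import Defs.
From mathcomp Require Import all_boot all_order all_algebra.
From mathcomp Require Import lra.
Import Order.TTheory GRing.Theory Num.Theory.
Local Open Scope ring_scope.

Definition swapf {n} (s : {ffun 'I_n -> bool}) (i j : 'I_n) : {ffun 'I_n -> bool} :=
  [ffun k => if k == i then false else if k == j then true else s k].

Lemma swap_sum (R : realFieldType) n (s : {ffun 'I_n -> bool}) (i j : 'I_n) (f : 'I_n -> R) :
  s i -> ~~ s j ->
  \sum_(k < n) ((swapf s i j k)%:R * f k) = \sum_(k < n) ((s k)%:R * f k) - f i + f j.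
Proof.
move=> si sj.
have ij : i != j by apply/eqP=> e; move: sj; rewrite -e si.
have E : \sum_(k < n) (s k)%:R * f k = (s i)%:R * f i + ((s j)%:R * f j + \sum_(k < n | (k != i) && (k != j)) (s k)%:R * f k).
  by rewrite (bigD1 i) //= (bigD1 j) //= eq_sym.
rewrite E (bigD1 i) //= (bigD1 j) /=; last by rewrite eq_sym.
rewrite !ffunE eqxx eq_sym (negbTE ij) eqxx si (negbTE sj) /=.
have -> : \sum_(k | (k != i) && (k != j)) (swapf s i j k)%:R * f k =
          \sum_(k | (k != i) && (k != j)) (s k)%:R * f k.
  by apply: eq_bigr => k /andP[ki kj]; rewrite ffunE (negPf ki) (negPf kj).
rewrite mul0r mul1r mul1r mul0r; lra.
Qed.

Lemma U_eq (R : realFieldType) (Phi : R -> R -> R -> R)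
  (hPhi : forall (t t' v p : R), Phi t v p = Phi t' v p)
  n (eta : 'I_n -> R) (s s' : {ffun 'I_n -> bool}) :
  vrate R s = vrate R s' -> U_Psi Phi eta s = U_Psi Phi eta s'.
Proof.
move=> e; rewrite /U_Psi; apply: eq_bigr => y _; rewrite /Psi_of e.
by rewrite (hPhi _ 0) (hPhi (TPhat R s' y) 0).
Qed.

Theorem proposition2 (R : realFieldType) (Phi : R -> R -> R -> R)
  (hPhi : forall (t t' v p : R), Phi t v p = Phi t' v p)
  (n : nat) (eta : 'I_n -> R)
  (heta : forall i, 0 <= eta i <= 1) :
  exists sstar : {ffun 'I_n -> bool},
    (forall s : {ffun 'I_n -> bool}, U_Psi Phi eta s <= U_Psi Phi eta sstar) /\
    (forall i j : 'I_n, sstar i -> ~~ sstar j -> eta j <= eta i).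
Proof.
pose U := U_Psi Phi eta.
pose w (s : {ffun 'I_n -> bool}) := \sum_(k < n) ((s k)%:R * eta k).
pose s0 := Order.arg_max [ffun=> false] xpredT U.
have hs0 : forall s, U s <= U s0.
  rewrite /s0; case: arg_maxP => //= x _ H s; exact: H.
pose s1 := Order.arg_max s0 (fun s => U s0 <= U s) w.
have : (U s0 <= U s1) /\ forall s, U s0 <= U s -> w s <= w s1.
  rewrite /s1; case: arg_maxP => //= x H1 H2; split => // s; exact: H2.
move=> [h1 h2]; exists s1; split.
  by move=> s; apply: le_trans (hs0 s) h1.
move=> i j si sj; rewrite leNgt; apply/negP => lt.
have cnt : vrate R (swapf s1 i j) = vrate R s1.
  rewrite /vrate; congr (_ * _).
  have := @swap_sum R n s1 i j (fun _ => (1:R)) si sj.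
  under eq_bigr do rewrite mulr1.
  under [X in _ = X - _ + _ -> _]eq_bigr do rewrite mulr1.
  move=> ->; lra.
have := h2 (swapf s1 i j).
rewrite /U (@U_eq R Phi hPhi n eta _ _ cnt) => /(_ h1).
rewrite /w swap_sum //; rewrite -/(w s1); lra.
Qed.
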